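(* Let $E_1,\dots,E_N$ be a symmetric sequence of events with correlation functions $G_k$. Then for every $k$ with $2\le k\le N$ and all $r_2,\dots,r_k\in\{0,1\}$, $$G_k(1,r_2,\dots,r_k)=-G_k(0,r_2,\dots,r_k).$$
   Context: $\mathbbm{1}_E$ is the indicator function of an event $E$. A finite sequence of events $E_1,\dots,E_N$ on a common probability space is called symmetric if for all $r_1,\dots,r_N\in\{0,1\}$ and all permutations $\sigma$ of $\{1,\dots,N\}$, $P(\mathbbm{1}_{E_1}=r_1,\dots,\mathbbm{1}_{E_N}=r_N)=P(\mathbbm{1}_{E_1}=r_{\sigma(1)},\dots,\mathbbm{1}_{E_N}=r_{\sigma(N)})$. For $1\le k\le N$ the probability function of order $k$ is $P_k(r_1,\dots,r_k):=\sum_{r_{k+1},\dots,r_N\in\{0,1\}}P(\mathbbm{1}_{E_1}=r_1,\dots,\mathbbm{1}_{E_N}=r_N)$. The correlation functions $G_k:\{0,1\}^k\to\mathbb{R}$ are defined by $G_1:=P_1$ and, recursively for $1<k\le N$, $$G_k(r_1,\dots,r_k):=P_k(r_1,\dots,r_k)-\sum_{\sigma}\sum_{l=1}^{k-1}\frac{1}{(l-1)!\,(k-l)!}G_l(r_1,r_{\sigma(2)},\dots,r_{\sigma(l)})\,P_{k-l}(r_{\sigma(l+1)},\dots,r_{\sigma(k)}),$$ where $\sigma$ runs over all permutations of $\{2,\dots,k\}$. *)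

(* Defs.v *)
From HB Require Import structures.
From mathcomp Require Import all_boot all_order all_algebra all_fingroup.
Set Implicit Arguments. Unset Strict Implicit. Unset Printing Implicit Defensive.
Import Order.TTheory GRing.Theory Num.Theory.
Local Open Scope ring_scope.

(* The joint law of the indicators of N events E_1,...,E_N:
   jl x = P(1_{E_1} = x 0, ..., 1_{E_N} = x (N-1)),  x : {0,1}^N  (true = 1). *)
Definition joint_law (R : realFieldType) (N : nat) :=
  {ffun 'I_N -> bool} -> R.

Definition is_prob_law (R : realFieldType) (N : nat) (jl : joint_law R N) :=
  (forall x, 0 <= jl x) /\ \sum_x jl x = 1.

Definition symmetric_law (R : realFieldType) (N : nat) (jl : joint_law R N) :=
  forall (x : {ffun 'I_N -> bool}) (s : 'S_N), jl x = jl [ffun i => x (s i)].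

(* probability function of order k = size r:
   P_k(r_1,...,r_k) = sum over r_{k+1},...,r_N of the joint law *)
Definition Pk (R : realFieldType) (N : nat) (jl : joint_law R N) (r : seq bool) : R :=
  \sum_(x : {ffun 'I_N -> bool} |
          [forall i : 'I_N, (val i < size r)%N ==> (x i == nth false r i)]) jl x.

Definition permute_tail (t : seq bool) (s : 'S_(size t)) : seq bool :=
  [seq nth false t (s i) | i <- enum 'I_(size t)].

(* Auxiliary recursion with fuel m (meaningful when size r <= m):
   G_k(r_1,...,r_k) = P_k(r) - sum_sigma sum_{l=1}^{k-1}
       1/((l-1)!(k-l)!) G_l(r_1, r_sigma(2..l)) P_{k-l}(r_sigma(l+1..k)). *)
Fixpoint Gaux (R : realFieldType) (N : nat) (jl : joint_law R N)
    (m : nat) (r : seq bool) {struct m} : R :=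
  match m with
  | 0 => 0
  | m'.+1 =>
    match r with
    | [::] => 0
    | r1 :: t =>
      Pk jl r -
      \sum_(s : 'S_(size t))
        \sum_(1 <= l < size r)
          ((((l.-1)`! * (size r - l)`!)%N)%:R)^-1 *
          Gaux jl m' (r1 :: take l.-1 (permute_tail s)) *
          Pk jl (drop l.-1 (permute_tail s))
    end
  end.

Definition Gcorr (R : realFieldType) (N : nat) (jl : joint_law R N) (r : seq bool) : R :=
  Gaux jl (size r) r.

(* Main.v *)
Require Import Defs.
From HB Require Import structures.
From mathcomp Require Import all_boot all_order all_algebra all_fingroup.
From mathcomp Require Import zify.
Import Order.TTheory GRing.Theory Num.Theory.
Local Open Scope ring_scope.
Set Implicit Arguments. Unset Strict Implicit.

Section S.
Variables (R : realFieldType) (N : nat) (jl : joint_law R N).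
Hypothesis Hsym : symmetric_law jl.

Lemma Lperm (s : 'S_N) (P : pred {ffun 'I_N -> bool}) :
  \sum_(x | P x) jl x = \sum_(x : {ffun 'I_N -> bool} | P [ffun i => x (s i)]) jl x.
Proof.
rewrite (reindex (fun x : {ffun 'I_N -> bool} => [ffun i => x (s i)])) /=.
  by apply: eq_bigr => x _; rewrite -Hsym.
exists (fun x : {ffun 'I_N -> bool} => [ffun i => x ((s^-1)%g i)]) => x _;
  apply/ffunP => i; rewrite !ffunE ?permK ?permKV //.
Qed.

Lemma PkE r : Pk jl r = \sum_(x : {ffun 'I_N -> bool} | [forall i : 'I_N, (val i < size r)%N ==> (x i == nth false r i)]) jl x.
Proof. by []. Qed.

Definition extf n (s : 'S_n) (i : 'I_N) : 'I_N :=
  if (insub (val i) : option 'I_n) is Some j then insubd i (val (s j)) else i.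

Lemma extfE n (s : 'S_n) (hn : (n <= N)%N) (i : 'I_N) (H : (val i < n)%N) :
  val (extf s i) = val (s (Ordinal H)).
Proof.
rewrite /extf insubT val_insubd.
have -> : Sub (val i) H = Ordinal H by apply: val_inj.
by rewrite (leq_trans (ltn_ord _) hn).
Qed.

Lemma extfE' n (s : 'S_n) (i : 'I_N) (H : (n <= val i)%N) : extf s i = i.
Proof. by rewrite /extf insubF // ltnNge H. Qed.

Lemma extf_inj n (s : 'S_n) (hn : (n <= N)%N) : injective (extf s).
Proof.
move=> i j; case: (ltnP (val i) n) => Hi; case: (ltnP (val j) n) => Hj.
- move=> /(congr1 val); rewrite !(@extfE _ s hn _ Hi, @extfE _ s hn _ Hj) => /val_inj/perm_inj.
  by move=> /(congr1 val) /= /val_inj.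
- rewrite (extfE' s Hj) => E; move: (ltn_ord (s (Ordinal Hi))).
  by rewrite -(@extfE _ s hn _ Hi) E ltnNge Hj.
- rewrite (extfE' s Hi) => E; move: (ltn_ord (s (Ordinal Hj))).
  by rewrite -(@extfE _ s hn _ Hj) -E ltnNge Hi.
- by rewrite (extfE' s Hi) (extfE' s Hj).
Qed.

Lemma size_pt t (s : 'S_(size t)) : size (permute_tail s) = size t.
Proof. by rewrite /permute_tail size_map size_enum_ord. Qed.

Lemma ptE t (s : 'S_(size t)) i (H : (i < size t)%N) :
  nth false (permute_tail s) i = nth false t (s (Ordinal H)).
Proof.
rewrite /permute_tail (nth_map (Ordinal H)) ?size_enum_ord //.
have -> : nth (Ordinal H) (enum 'I_(size t)) i = Ordinal H.
  by apply: val_inj; rewrite /= nth_enum_ord.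
by [].
Qed.

Lemma Pk_pt t (s : 'S_(size t)) (hn : (size t <= N)%N) :
  Pk jl (permute_tail s) = Pk jl t.
Proof.
rewrite !PkE (Lperm (perm (@extf_inj _ s hn))) size_pt; apply: eq_bigl => x.
apply/forallP/forallP => /= H i; apply/implyP => Hi; rewrite ?ffunE ?permE.
- set j := (s^-1)%g (Ordinal Hi).
  have Hj : (val j < N)%N by exact: leq_trans (ltn_ord j) hn.
  have := H (Ordinal Hj); rewrite ffunE permE /= ltn_ord /= (ptE _ (ltn_ord j)).
  have -> : Ordinal (ltn_ord j) = j by apply: val_inj.
  rewrite /j permKV => /eqP E; apply/eqP; rewrite -E; congr (x _).
  apply: val_inj; rewrite (@extfE _ s hn (Ordinal Hj) (ltn_ord j)) /=.
  have -> : Ordinal (ltn_ord j) = j by apply: val_inj.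
  by rewrite /j permKV.
- have E1 := @extfE _ s hn _ Hi.
  have := H (extf s i); rewrite E1 ltn_ord /= => /eqP E; apply/eqP; rewrite ptE E.
  by congr (nth _ _ _).
Qed.

Lemma Pk_cons t (H : (size t < N)%N) :
  Pk jl (true :: t) + Pk jl (false :: t) = Pk jl t.
Proof.
have N0 : (0 < N)%N by exact: leq_ltn_trans (leq0n _) H.
pose i0 : 'I_N := Ordinal N0.
pose p := perm (@ordS_inj N).
have key : forall b (x : {ffun 'I_N -> bool}),
  [forall i : 'I_N, (val i < size (b :: t))%N ==> (x i == nth false (b :: t) i)] =
  [forall i : 'I_N, (val i < size t)%N ==> ([ffun j => x (p j)] i == nth false t i)]
  && (x i0 == b).
  move=> b x; apply/forallP/andP.
  - move=> Hx; split.
      apply/forallP => i; apply/implyP => Hi; rewrite ffunE permE.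
      have Hi1 : (i.+1 < N)%N by exact: leq_ltn_trans Hi H.
      have := Hx (ordS i); rewrite /= modn_small //= ltnS Hi /=.
      by [].
    by have := Hx i0.
  - move=> [/forallP Hq Hb] j; apply/implyP => Hj.
    case Ej: (val j) => [|k].
      have -> : j = i0 by apply: val_inj.
      by [].
    have Hk : (k < N)%N by apply: ltnW; rewrite -Ej ltn_ord.
    have Hkt : (k < size t)%N by move: Hj; rewrite Ej.
    have := Hq (Ordinal Hk); rewrite /= Hkt /= ffunE permE.
    have -> : ordS (Ordinal Hk) = j.
      by apply: val_inj; rewrite /= modn_small // -Ej ltn_ord.
    by [].
rewrite [Pk jl t]PkE (Lperm p) (bigID (fun x : {ffun 'I_N -> bool} => x i0)) /=.
congr (_ + _); rewrite PkE; apply: eq_bigl => x; rewrite key.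
  by rewrite eqb_id.
by rewrite eqbF_neg.
Qed.

Lemma Pk_nil : is_prob_law jl -> Pk jl [::] = 1.
Proof.
case=> _ <-; rewrite PkE; apply: eq_bigl => x; by apply/forallP.
Qed.

Lemma S_main (Hp : is_prob_law jl) m : forall t, (size t < m)%N -> (size t < N)%N ->
  Gaux jl m (true :: t) + Gaux jl m (false :: t) = if t is [::] then 1 else 0.
Proof.
elim: m => [|m IH] t // Hm HN.
rewrite /= addrACA -opprD -big_split /= Pk_cons //.
have -> : \sum_(s : 'S_(size t))
   (\sum_(1 <= l < (size t).+1)
       ((((l.-1)`! * ((size t).+1 - l)`!)%N)%:R)^-1 *
       Gaux jl m (true :: take l.-1 (permute_tail s)) *
       Pk jl (drop l.-1 (permute_tail s)) +
    \sum_(1 <= l < (size t).+1)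
       ((((l.-1)`! * ((size t).+1 - l)`!)%N)%:R)^-1 *
       Gaux jl m (false :: take l.-1 (permute_tail s)) *
       Pk jl (drop l.-1 (permute_tail s)))
  = \sum_(s : 'S_(size t)) if t is [::] then 0 else
       (((size t)`!)%:R)^-1 * Pk jl t.
  apply: eq_bigr => s _; rewrite -big_split /=.
  case: t Hm HN s => [|b t] Hm HN s.
    by rewrite big_geq.
  under eq_bigr do rewrite -!mulrA -mulrDr -mulrDl.
  rewrite big_ltn //.
  have m0 : (0 < m)%N by move: Hm; rewrite /= !ltnS; apply: leq_ltn_trans.
  have N0 : (0 < N)%N by apply: leq_ltn_trans HN.
  rewrite (_ : 1.-1 = 0) // take0 drop0 (IH [::] m0 N0) mul1r subn1 [(_ .+1).-1]/= [0`!]/= mul1n.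
  rewrite (Pk_pt s (ltnW HN)) [size (b :: t)]/=.
  rewrite big_nat_cond big1 ?addr0 // => l /andP[/andP[Hl1 Hl2] _].
  case: l Hl1 Hl2 => [|[|l]] // _ Hl2.
  rewrite [l.+2.-1]/=.
  have Hs : size (take l.+1 (permute_tail s)) = l.+1.
    by rewrite size_take size_pt /=; move: Hl2; rewrite !ltnS => ->.
  have Hs1 : (size (take l.+1 (permute_tail s)) < m)%N.
    by rewrite Hs; move: Hm Hl2 => /=; lia.
  have Hs2 : (size (take l.+1 (permute_tail s)) < N)%N.
    by rewrite Hs; move: HN Hl2 => /=; lia.
  rewrite (IH _ Hs1 Hs2).
  case E: (take l.+1 (permute_tail s)) Hs => [|c u] //= _.
  by rewrite mul0r mulr0.
case: t Hm HN => [|b t] Hm HN.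
  by rewrite big1 // subr0 Pk_nil.
rewrite sumr_const card_Sn -mulrnAl -mulr_natl mulfV ?mul1r ?subrr //.
by rewrite pnatr_eq0 -lt0n fact_gt0.
Qed.
End S.

Theorem mainTheorem4 (R : realFieldType) (N : nat) (jl : joint_law R N)
    (Hprob : is_prob_law jl) (Hsym : symmetric_law jl)
    (t : seq bool) (Ht1 : (1 <= size t)%N) (HtN : (size t < N)%N) :
  Gcorr jl (true :: t) = - Gcorr jl (false :: t).
Proof.
apply/eqP; rewrite -addr_eq0 /Gcorr /=.
rewrite (S_main Hsym Hprob (ltnSn _) HtN).
by case: t Ht1 {HtN}.
Qed.
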